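(* Let $\gamma\in\mathbf{Sp}(2n,\mathbb R)$ with $\gamma\tau(\gamma)=I$. Then there exists $h\in\mathbf{Sp}(2n,\mathbb R)$ with $\gamma=\tau(h)h^{-1}$ if and only if $\mathfrak h_n^\gamma\neq\emptyset$.
   Context: $\mathbf{Sp}(2n,\mathbb R)$: real matrices $g=\begin{pmatrix}A&B\\C&D\end{pmatrix}$ with ${}^tgJg=J$, $J=\begin{pmatrix}0&I\\-I&0\end{pmatrix}$, acting on $\mathfrak h_n=\{Z\in M_n(\mathbb C):{}^tZ=Z,\mathrm{Im}Z>0\}$ by $gZ=(AZ+B)(CZ+D)^{-1}$. $\tau\begin{pmatrix}A&B\\C&D\end{pmatrix}=\begin{pmatrix}A&-B\\-C&D\end{pmatrix}$ and $\tau(Z)=-\overline Z$; $\mathfrak h_n^\gamma=\{Z\in\mathfrak h_n:\gamma Z=\tau(Z)\}$. *)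

(* Defs.v *)
From HB Require Import structures.
From mathcomp Require Import all_boot all_order all_algebra.
From mathcomp Require Import complex.
From mathcomp Require Import reals.
Set Implicit Arguments. Unset Strict Implicit. Unset Printing Implicit Defensive.
Import Order.TTheory GRing.Theory Num.Theory.
Local Open Scope ring_scope.

Section Siegel.
Variable R : realType.
Variable n : nat.

Definition Jmx : 'M[R]_(n + n) := block_mx 0 1%:M (- 1%:M) 0.

Definition symplectic (g : 'M[R]_(n + n)) : Prop := g^T *m Jmx *m g = Jmx.

Definition tau_mx (g : 'M[R]_(n + n)) : 'M[R]_(n + n) :=
  block_mx (ulsubmx g) (- ursubmx g) (- dlsubmx g) (drsubmx g).

Definition cmx (m p : nat) (A : 'M[R]_(m, p)) : 'M[R[i]]_(m, p) :=
  map_mx (fun x => (x%:C)%C) A.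

Definition in_siegel (Z : 'M[R[i]]_n) : Prop :=
  Z^T = Z /\
  forall v : 'rV[R]_n, v != 0 ->
    0 < (v *m map_mx (@complex.Im R) Z *m v^T) ord0 ord0.

Definition sp_act (g : 'M[R]_(n + n)) (Z : 'M[R[i]]_n) : 'M[R[i]]_n :=
  (cmx (ulsubmx g) *m Z + cmx (ursubmx g)) *m
    invmx (cmx (dlsubmx g) *m Z + cmx (drsubmx g)).

Definition tau_Z (Z : 'M[R[i]]_n) : 'M[R[i]]_n :=
  \matrix_(i, j) (- (conjc (Z i j))).

Definition siegel_gamma (gamma : 'M[R]_(n + n)) (Z : 'M[R[i]]_n) : Prop :=
  in_siegel Z /\ sp_act gamma Z = tau_Z Z.
End Siegel.

(* Main.v *)
Require Import Defs.
From HB Require Import structures.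
From mathcomp Require Import all_boot all_order all_algebra.
From mathcomp Require Import complex.
From mathcomp Require Import reals.
From mathcomp Require Import ring lra.
Set Implicit Arguments. Unset Strict Implicit. Unset Printing Implicit Defensive.
Import Order.TTheory GRing.Theory Num.Theory.
Local Open Scope ring_scope.


Lemma trN (T : zmodType) m p (A : 'M[T]_(m, p)) : (- A)^T = - A^T.
Proof. by apply/matrixP => i j; rewrite !mxE. Qed.
Lemma trD (T : zmodType) m p (A B : 'M[T]_(m, p)) : (A + B)^T = A^T + B^T.
Proof. by apply/matrixP => i j; rewrite !mxE. Qed.
Lemma trB (T : zmodType) m p (A B : 'M[T]_(m, p)) : (A - B)^T = A^T - B^T.
Proof. by apply/matrixP => i j; rewrite !mxE. Qed.
Lemma trZ (T : comPzRingType) m p (a : T) (A : 'M[T]_(m, p)) : (a *: A)^T = a *: A^T.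
Proof. by apply/matrixP => i j; rewrite !mxE. Qed.

Definition cj (R : rcfType) m p (A : 'M[R[i]]_(m, p)) := map_mx (@conjc R) A.
Arguments cj {R m p}.
Definition cx (R : realType) m p (x y : 'M[R]_(m, p)) : 'M[R[i]]_(m, p) :=
  cmx x + 'i%C *: cmx y.
Arguments cx {R m p}.

Lemma cx_entry (R : realType) m p (x y : 'M[R]_(m, p)) i j :
  cx x y i j = Complex (x i j) (y i j).
Proof.
rewrite !mxE /=; apply/eqP; rewrite eq_complex /=.
by apply/andP; split; apply/eqP; ring.
Qed.

Lemma cx_eta (R : realType) m p (M : 'M[R[i]]_(m, p)) :
  M = cx (map_mx (@complex.Re R) M) (map_mx (@complex.Im R) M).
Proof. by apply/matrixP => i j; rewrite cx_entry !mxE; case: (M i j). Qed.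

Lemma cx_inj (R : realType) m p (x y x' y' : 'M[R]_(m, p)) :
  cx x y = cx x' y' -> x = x' /\ y = y'.
Proof.
move=> /matrixP E; split; apply/matrixP => i j; have := E i j;
by rewrite !cx_entry => -[].
Qed.

Lemma cxT (R : realType) m p (x y : 'M[R]_(m, p)) : (cx x y)^T = cx x^T y^T.
Proof. by apply/matrixP => i j; rewrite mxE !cx_entry !mxE. Qed.
Lemma cxJ (R : realType) m p (x y : 'M[R]_(m, p)) : cj (cx x y) = cx x (- y).
Proof. by apply/matrixP => i j; rewrite mxE !cx_entry !mxE. Qed.
Lemma cxD (R : realType) m p (x y u v : 'M[R]_(m, p)) :
  cx x y + cx u v = cx (x + u) (y + v).
Proof. by apply/matrixP => i j; rewrite mxE !cx_entry !mxE. Qed.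
Lemma cxN (R : realType) m p (x y : 'M[R]_(m, p)) : - cx x y = cx (- x) (- y).
Proof. by apply/matrixP => i j; rewrite mxE !cx_entry !mxE. Qed.
Lemma cxB (R : realType) m p (x y u v : 'M[R]_(m, p)) :
  cx x y - cx u v = cx (x - u) (y - v).
Proof. by rewrite cxN cxD. Qed.
Lemma cx0 (R : realType) m p : cx (0 : 'M[R]_(m, p)) 0 = 0.
Proof. by apply/matrixP => i j; rewrite cx_entry !mxE. Qed.
Lemma cmx_cx (R : realType) m p (x : 'M[R]_(m, p)) : cmx x = cx x 0.
Proof. by apply/matrixP => i j; rewrite cx_entry !mxE. Qed.
Lemma cx1 (R : realType) n : cx (1%:M : 'M[R]_n) 0 = 1%:M.
Proof.
apply/matrixP => i j; rewrite cx_entry !mxE.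
by case: (i == j) => //=; apply/eqP; rewrite eq_complex /= !eqxx.
Qed.
Lemma cxZi (R : realType) m p (x y : 'M[R]_(m, p)) : 'i%C *: cx x y = cx (- y) x.
Proof.
apply/matrixP => i j; rewrite mxE !cx_entry !mxE /=.
by apply/eqP; rewrite eq_complex /=; apply/andP; split; apply/eqP; ring.
Qed.
Lemma cxZ (R : realType) m p (a : R) (x y : 'M[R]_(m, p)) :
  a%:C%C *: cx x y = cx (a *: x) (a *: y).
Proof.
apply/matrixP => i j; rewrite mxE !cx_entry !mxE /=.
by apply/eqP; rewrite eq_complex /=; apply/andP; split; apply/eqP; ring.
Qed.
Lemma cmxM (R : realType) m p q (A : 'M[R]_(m, p)) (B : 'M[R]_(p, q)) :
  cmx (A *m B) = cmx A *m cmx B.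
Proof. exact: map_mxM. Qed.

Lemma cxM (R : realType) m p q (x y : 'M[R]_(m, p)) (u v : 'M[R]_(p, q)) :
  cx x y *m cx u v = cx (x *m u - y *m v) (x *m v + y *m u).
Proof.
rewrite /cx mulmxDl !mulmxDr -!scalemxAl -!scalemxAr !scalerA -!cmxM.
move: (x *m u) (x *m v) (y *m u) (y *m v) => a b c d.
apply/matrixP => i j; rewrite !mxE /=.
apply/eqP; rewrite eq_complex /=; apply/andP; split; apply/eqP; ring.
Qed.

Definition posdef (R : realType) n (Y : 'M[R]_n) :=
  forall v : 'rV[R]_n, v != 0 -> 0 < (v *m Y *m v^T) ord0 ord0.
Arguments posdef {R n}.

Lemma tr11 (T : Type) (M : 'M[T]_1) : M^T = M.
Proof. by apply/matrixP => i j; rewrite mxE !ord1. Qed.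

Lemma posdef1 (R : realType) n : posdef (1%:M : 'M[R]_n).
Proof.
move=> v v0; rewrite mulmx1 mxE lt0r; apply/andP; split; last first.
  by apply: sumr_ge0 => k _; rewrite mxE -expr2 sqr_ge0.
apply: contra v0 => /eqP s0; apply/eqP/matrixP => i k; rewrite !ord1 mxE.
have H : forall j : 'I_n, true -> 0 <= v 0 j * v^T j 0.
  by move=> j _; rewrite mxE -expr2 sqr_ge0.
have := psumr_eq0P H s0 (i := k) isT.
by rewrite mxE => /eqP; rewrite mulf_eq0 orbb => /eqP.
Qed.

Lemma psd (R : realType) n (Y : 'M[R]_n) : posdef Y ->
  forall v : 'rV[R]_n, 0 <= (v *m Y *m v^T) ord0 ord0.
Proof.
move=> Yp v; have [->|v0] := eqVneq v 0; last exact/ltW/Yp.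
by rewrite !mul0mx mxE.
Qed.

Lemma herm_pos (R : realType) n (Y : 'M[R]_n) (w : 'rV[R[i]]_n) :
  Y^T = Y -> posdef Y -> w != 0 ->
  exists2 x : R, 0 < x & (cj w *m cmx Y *m w^T) ord0 ord0 = (x%:C)%C.
Proof.
move=> Ys Yp w0.
rewrite (cx_eta w); set r := map_mx _ w; set s := map_mx _ w.
have rs0 : (r != 0) || (s != 0).
  apply: contraR w0; rewrite negb_or !negbK => /andP[/eqP r0 /eqP s0].
  by rewrite (cx_eta w) -/r -/s r0 s0 cx0.
rewrite cxJ cmx_cx cxT !cxM !mulmx0 subr0 add0r !mulNmx opprK.
have -> : r *m Y *m s^T = s *m Y *m r^T.
  by rewrite -[LHS]tr11 !trmx_mul trmxK Ys mulmxA.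
rewrite addrN cx_entry mxE; exists ((r *m Y *m r^T) ord0 ord0 + (s *m Y *m s^T) ord0 ord0) => //.
case/orP: rs0 => [r0|s0].
  by apply: ltr_pwDl; [apply: Yp | apply: psd].
by apply: ltr_pwDr; [apply: Yp | apply: psd].
apply/eqP; rewrite eq_complex /= (_ : (0 : 'M[R]_1) ord0 ord0 = 0) ?mxE //.
by rewrite !eqxx.
Qed.

Lemma sympP (R : realType) n (a b c d : 'M[R]_n) :
  symplectic (block_mx a b c d) <->
  [/\ a^T *m c = c^T *m a, b^T *m d = d^T *m b & a^T *m d - c^T *m b = 1%:M].
Proof.
rewrite /symplectic /Jmx tr_block_mx !mulmx_block.
rewrite !mulmx0 !mulmx1 !mulmxN !mulmx1 !add0r !addr0 !mulNmx.
split.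
  move/eq_block_mx => [e1 e2 _ e4]; split.
  - by apply/eqP; rewrite -subr_eq0 addrC e1.
  - by apply/eqP; rewrite -subr_eq0 addrC e4.
  - by rewrite addrC e2.
move=> [e1 e4 e2].
have e3 : d^T *m a - b^T *m c = 1%:M.
  by have := congr1 trmx e2; rewrite trB !trmx_mul !trmxK trmx1.
rewrite e1 e4 !addNr addrC e2; congr block_mx.
by rewrite -e3 opprB addrC.
Qed.

Lemma cholesky (R : realType) n (G : 'M[R]_n) :
  G^T = G -> posdef G -> exists N : 'M[R]_n, N^T *m G *m N = 1%:M.
Proof.
elim: n G => [|n IH] G Gs Gp.
  by exists 1%:M; apply/matrixP => -[].
move: G Gs Gp; change n.+1 with (1 + n)%N => G Gs Gp.
have GE := esym (submxK G).
set g := ulsubmx G in GE; set r := ursubmx G in GE; set r' := dlsubmx G in GE.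
set G' := drsubmx G in GE.
have Gs' := Gs; rewrite GE tr_block_mx in Gs'.
have [gs r'E rE G's] := eq_block_mx Gs'.
have g0 : 0 < g 0 0.
  have := Gp (row_mx 1%:M 0 : 'rV_(1 + n)).
  rewrite GE mul_row_block tr_row_mx mul_row_col !mul0mx !addr0 trmx1 !mul1mx mulmx1.
  rewrite trmx0 mulmx0 addr0; apply; apply/eqP => /(congr1 lsubmx); rewrite row_mxKl => /matrixP/(_ 0 0).
  by rewrite !mxE /= => /eqP; rewrite oner_eq0.
set a := g 0 0.
have gE : g = a%:M by apply: mx11_scalar.
have a0 : a != 0 by rewrite gt_eqF.
pose S := G' - a^-1 *: (r^T *m r).
pose E : 'M[R]_(1 + n) := block_mx 1%:M (- (a^-1 *: r)) 0 1%:M.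
have EGE : E^T *m G *m E = block_mx g 0 0 S.
  rewrite GE /E tr_block_mx !trmx1 trmx0 !mulmx_block.
  rewrite !mul1mx !mul0mx !mulmx1 !mulmx0 ?add0r ?addr0.
  rewrite -rE gE mul_scalar_mx mul_mx_scalar !trN !trZ scalerN scalerA mulfV // scale1r.
  rewrite scalerN scalerA mulfV // scale1r !addNr mul0mx add0r mulNmx -scalemxAl addrC.
  by [].
have Ss : S^T = S.
  by rewrite /S trB trZ trmx_mul trmxK G's.
have Sp : posdef S.
  move=> v v0.
  pose u := row_mx (0 : 'rV_1) v *m E^T.
  have uE : u *m G *m u^T = v *m S *m v^T.
    rewrite /u trmx_mul trmxK !mulmxA -(mulmxA _ E^T) -(mulmxA _ (E^T *m G)) EGE.
    by rewrite mul_row_block tr_row_mx mul_row_col !mul0mx !add0r trmx0 mulmx0 add0r.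
  rewrite -uE; apply: Gp; apply: contraNneq v0 => u0.
  have := congr1 rsubmx u0; rewrite /u /E tr_block_mx mul_row_block row_mxKr.
  by rewrite mul0mx add0r trmx1 mulmx1 => ->; rewrite linear0.
have [N' N'E] := IH S Ss Sp.
set s := Num.sqrt a.
have s0 : 0 < s by rewrite sqrtr_gt0.
exists (E *m block_mx (s^-1)%:M 0 0 N').
rewrite trmx_mul !mulmxA -(mulmxA _ E^T) -(mulmxA _ (E^T *m G)) EGE.
rewrite tr_block_mx !trmx0 tr_scalar_mx !mulmx_block.
rewrite !mulmx0 !mul0mx !addr0 !add0r N'E gE !mul_scalar_mx scale_scalar_mx.
rewrite -scalar_mxM (scalar_mx_block 1 n (1 : R)); congr block_mx.
congr (_ %:M).
- by rewrite mulrAC -expr2 exprVn sqr_sqrtr ?mulVf // ltW.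
- by rewrite mul0mx.
- by rewrite mul0mx.
Qed.

Lemma cjM (R : realType) m p q (A : 'M[R[i]]_(m, p)) (B : 'M[R[i]]_(p, q)) :
  cj (A *m B) = cj A *m cj B.
Proof. exact: map_mxM. Qed.
Lemma cjV (R : realType) n (A : 'M[R[i]]_n) : cj (invmx A) = invmx (cj A).
Proof. exact: map_invmx. Qed.
Lemma cmxV (R : realType) n (A : 'M[R]_n) : cmx (invmx A) = invmx (cmx A).
Proof. exact: map_invmx. Qed.
Lemma cjK (R : realType) m p (A : 'M[R[i]]_(m, p)) : cj (cj A) = A.
Proof. by apply/matrixP => i j; rewrite !mxE conjcK. Qed.
Lemma cj_cmx (R : realType) m p (A : 'M[R]_(m, p)) : cj (cmx A) = cmx A.
Proof. by apply/matrixP => i j; rewrite !mxE conjc_real. Qed.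
Lemma cjT (R : realType) m p (A : 'M[R[i]]_(m, p)) : cj A^T = (cj A)^T.
Proof. by apply/matrixP => i j; rewrite !mxE. Qed.
Lemma cjD (R : realType) m p (A B : 'M[R[i]]_(m, p)) : cj (A + B) = cj A + cj B.
Proof. by apply/matrixP => i j; rewrite !mxE rmorphD. Qed.
Lemma cjN (R : realType) m p (A : 'M[R[i]]_(m, p)) : cj (- A) = - cj A.
Proof. by apply/matrixP => i j; rewrite !mxE rmorphN. Qed.
Lemma cjZ (R : realType) m p (a : R[i]) (A : 'M[R[i]]_(m, p)) :
  cj (a *: A) = (a^*)%C *: cj A.
Proof. by apply/matrixP => i j; rewrite !mxE rmorphM. Qed.
Lemma cj1 (R : realType) n : cj (1%:M : 'M[R[i]]_n) = 1%:M.
Proof. by apply/matrixP => i j; rewrite !mxE; case: (i == j); rewrite ?rmorph1 ?rmorph0. Qed.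
Lemma cmx1 (R : realType) n : cmx (1%:M : 'M[R]_n) = 1%:M.
Proof. by rewrite cmx_cx cx1. Qed.
Lemma cmx_inj (R : realType) m p (A B : 'M[R]_(m, p)) : cmx A = cmx B -> A = B.
Proof. by rewrite !cmx_cx => /cx_inj[]. Qed.
Lemma cmxT (R : realType) m p (A : 'M[R]_(m, p)) : cmx A^T = (cmx A)^T.
Proof. by apply/matrixP => i j; rewrite !mxE. Qed.
Lemma cmxl (R : realType) m p q (A : 'M[R]_(m, p)) (x y : 'M[R]_(p, q)) :
  cmx A *m cx x y = cx (A *m x) (A *m y).
Proof. by rewrite cmx_cx cxM !mul0mx subr0 addr0. Qed.
Lemma cmxr (R : realType) m p q (A : 'M[R]_(p, q)) (x y : 'M[R]_(m, p)) :
  cx x y *m cmx A = cx (x *m A) (y *m A).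
Proof. by rewrite cmx_cx cxM !mulmx0 subr0 add0r. Qed.
Lemma cx0i (R : realType) m p (Y : 'M[R]_(m, p)) : cx 0 Y = 'i%C *: cmx Y.
Proof. by rewrite cmx_cx cxZi oppr0. Qed.

Lemma tau_block (R : realType) n (a b c d : 'M[R]_n) :
  tau_mx (block_mx a b c d) = block_mx a (- b) (- c) d.
Proof. by rewrite /tau_mx block_mxKul block_mxKur block_mxKdl block_mxKdr. Qed.

Lemma tauZE (R : realType) n (Z : 'M[R[i]]_n) : tau_Z Z = - cj Z.
Proof. by apply/matrixP => i j; rewrite !mxE. Qed.

Lemma JJ (R : realType) n : Jmx R n *m Jmx R n = - 1%:M.
Proof.
rewrite /Jmx mulmx_block !mulmx0 !mul0mx !mulmx1 !mulmxN !mulmx1 !add0r !addr0.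
by rewrite -[0]oppr0 -opp_block_mx -scalar_mx_block.
Qed.

Lemma sym_unit (R : realType) n (g : 'M[R]_(n + n)) : symplectic g -> g \in unitmx.
Proof.
move=> gs; suff : (- (Jmx R n *m g^T *m Jmx R n)) *m g = 1%:M by case/mulmx1_unit.
by rewrite mulNmx -!mulmxA (mulmxA g^T) gs JJ opprK.
Qed.
Lemma cj0 (R : realType) m p : cj (0 : 'M[R[i]]_(m, p)) = 0.
Proof. by apply/matrixP => i j; rewrite !mxE rmorph0. Qed.
Lemma cmx0 (R : realType) m p : cmx (0 : 'M[R]_(m, p)) = 0.
Proof. by rewrite cmx_cx cx0. Qed.
Lemma invmxM' (F : fieldType) n (A B : 'M[F]_n) :
  A \in unitmx -> B \in unitmx -> invmx (A *m B) = invmx B *m invmx A.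
Proof.
move=> Au Bu; have ABu : A *m B \in unitmx by rewrite unitmx_mul Au.
have H : (invmx B *m invmx A) *m (A *m B) = 1%:M.
  by rewrite mulmxA -(mulmxA _ (invmx A)) mulVmx // mulmx1 mulVmx.
by rewrite -[RHS](mulmxK ABu) H mul1mx.
Qed.

Lemma cmxJ (R : realType) n : cmx (Jmx R n) = block_mx 0 1%:M (- 1%:M) 0.
Proof. by rewrite /cmx /Jmx map_block_mx !map_mx0 map_mxN map_mx1. Qed.

Lemma Jform (R : realType) n k (u v u' v' : 'M[R[i]]_(n, k)) :
  (cj (col_mx u v))^T *m cmx (Jmx R n) *m col_mx u' v' = (cj u)^T *m v' - (cj v)^T *m u'.
Proof.
rewrite cmxJ /cj map_col_mx tr_col_mx mul_row_block mul_row_col.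
by rewrite !mulmx0 !mulmx1 !mulmxN !mulmx1 !add0r !addr0 mulNmx addrC.
Qed.

Lemma symp_form (R : realType) n k (g : 'M[R]_(n + n)) (W : 'M[R[i]]_(n + n, k)) :
  symplectic g ->
  (cj (cmx g *m W))^T *m cmx (Jmx R n) *m (cmx g *m W) = (cj W)^T *m cmx (Jmx R n) *m W.
Proof.
move=> gs; rewrite cjM cj_cmx trmx_mul -cmxT !mulmxA -!(mulmxA (cj W)^T) -!cmxM.
by rewrite gs.
Qed.
Lemma cmxB (R : realType) m p (A B : 'M[R]_(m, p)) : cmx (A - B) = cmx A - cmx B.
Proof. by apply/matrixP => i j; rewrite !mxE rmorphB. Qed.
Lemma cmxD (R : realType) m p (A B : 'M[R]_(m, p)) : cmx (A + B) = cmx A + cmx B.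
Proof. by apply/matrixP => i j; rewrite !mxE rmorphD. Qed.
Lemma cx0s (R : realType) m p (Y : 'M[R]_(m, p)) (s : R) :
  cx 0 (s *: Y) = (Complex 0 s) *: cmx Y.
Proof.
apply/matrixP => i j; rewrite cx_entry !mxE; apply/eqP; rewrite eq_complex /=.
by apply/andP; split; apply/eqP; ring.
Qed.


Lemma posdef2 (R : realType) n : posdef (1%:M + 1%:M : 'M[R]_n).
Proof.
move=> v v0; rewrite mulmxDr mulmxDl mxE; apply: addr_gt0; exact: posdef1.
Qed.

Lemma cx_ent (R : realType) (x y : 'M[R]_1) : cx x y ord0 ord0 = Complex (x ord0 ord0) (y ord0 ord0).
Proof. exact: cx_entry. Qed.

Lemma fwd (R : realType) n (g h : 'M[R]_(n + n)) :
  symplectic h -> g *m h = tau_mx h -> exists Z, siegel_gamma g Z.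
Proof.
rewrite -(submxK g) -(submxK h).
move: (ulsubmx g) (ursubmx g) (dlsubmx g) (drsubmx g) => A B C D.
move: (ulsubmx h) (ursubmx h) (dlsubmx h) (drsubmx h) => a b c d.
move=> /sympP [S1 S3 S2]; rewrite tau_block mulmx_block => /eq_block_mx [G1 G2 G3 G4].
have S2' : d^T *m a - b^T *m c = 1%:M.
  by have := congr1 trmx S2; rewrite trB !trmx_mul !trmxK trmx1.
pose P := cx b a; pose Q := cx d c.
have F1 : Q^T *m P = P^T *m Q.
  rewrite /P /Q !cxT !cxM S1 S3; congr cx.
  apply/matrixP => i j; move/matrixP/(_ i j): S2; move/matrixP/(_ i j): S2'.
  rewrite !mxE; lra.
have F2 : (cj Q)^T *m P - (cj P)^T *m Q = cx 0 (1%:M + 1%:M).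
  rewrite /P /Q !cxJ !cxT !cxM cxB !trN !mulNmx !opprK S1 S3 subrr; congr cx.
  apply/matrixP => i j; move/matrixP/(_ i j): S2; move/matrixP/(_ i j): S2'.
  rewrite !mxE; lra.
have PE : P = cx b a by []. have QE : Q = cx d c by [].
clearbody P Q.
have Qu : Q \in unitmx.
  rewrite unitmxE unitfE -det_tr; apply/negP => /det0P [v v0 vQ].
  have I2s : (1%:M + 1%:M : 'M[R]_n)^T = 1%:M + 1%:M by rewrite trD trmx1.
  have [x x0 xE] := herm_pos I2s (@posdef2 R n) v0.
  have := congr1 (fun M => (cj v *m M *m v^T) ord0 ord0) F2; rewrite /=.
  rewrite mulmxBr mulmxBl !mulmxA -cjT -cjM vQ -!mulmxA.
  have -> : Q *m v^T = 0 by rewrite -[Q]trmxK -trmx_mul vQ trmx0.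
  rewrite !mulmx0 cj0 !mul0mx subr0 mulmxA cx0i -scalemxAr -scalemxAl mxE [X in _ = X -> _]mxE xE.
  move/eqP; apply/negP; rewrite eq_sym mulf_eq0 negb_or; apply/andP; split.
    by rewrite eq_complex /= oner_eq0 andbF.
  by rewrite eq_complex /= gt_eqF.
pose Z := P *m invmx Q.
have ZE : Z = P *m invmx Q by [].
clearbody Z.
have QTu : Q^T \in unitmx by rewrite unitmx_tr.
have Zs : Z^T = Z.
  rewrite ZE trmx_mul trmx_inv -[P^T](mulmxK Qu) -F1 -mulmxA mulKmx //.
exists Z; split; first split.
- exact: Zs.
- move=> v v0; set Y := map_mx _ Z.
  pose Qs := (cj (invmx Q))^T.
  have E1 : Qs *m (cj Q)^T = 1%:M by rewrite -trmx_mul -cjM mulmxV // cj1 trmx1.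
  have E2 : Qs *m (cj P)^T = cj Z by rewrite -trmx_mul -cjM -ZE -cjT Zs.
  have ZcZ : Z - cj Z = cx 0 (Y + Y).
    by rewrite [in LHS](cx_eta Z) cxJ cxB subrr opprK.
  have E : Qs *m cx 0 (1%:M + 1%:M) *m invmx Q = cx 0 (Y + Y).
    rewrite -F2 -ZcZ mulmxBr mulmxBl !mulmxA E1 E2 mul1mx -!mulmxA mulmxV // mulmx1.
    by rewrite ZE.
  pose w := cmx v *m (invmx Q)^T.
  have w0 : w != 0.
    apply: contra v0 => /eqP w0; apply/eqP/cmx_inj; rewrite cmx0.
    by rewrite -[cmx v]mulmx1 -trmx1 -(mulmxV Qu) trmx_mul mulmxA -/w w0 mul0mx.
  have I2s : (1%:M + 1%:M : 'M[R]_n)^T = 1%:M + 1%:M by rewrite trD trmx1.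
  have [x x0 xE] := herm_pos I2s (@posdef2 R n) w0.
  have := congr1 (fun M => (cmx v *m M *m cmx v^T) ord0 ord0) E; rewrite /=.
  rewrite !cmxl !cmxr cx_entry.
  have -> : cmx v *m (Qs *m cx 0 (1%:M + 1%:M) *m invmx Q) *m cmx v^T
      = cj w *m cx 0 (1%:M + 1%:M) *m w^T.
    by rewrite /w cjM cj_cmx cjT trmx_mul trmxK cmxT !mulmxA.
  rewrite cx0i -scalemxAr -scalemxAl mxE xE => /(congr1 (@complex.Im R)) /=.
  rewrite mulmxDr mulmxDl mxE mul0r mul1r add0r => xE2.
  lra.
rewrite /sp_act block_mxKul block_mxKur block_mxKdl block_mxKdr tauZE.
have McQ : (cmx C *m Z + cmx D) *m Q = cj Q.
  by rewrite mulmxDl -mulmxA ZE mulmxKV // PE QE !cmxl cxD G3 G4 cxJ.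
have NcQ : (cmx A *m Z + cmx B) *m Q = - cj P.
  by rewrite mulmxDl -mulmxA ZE mulmxKV // PE QE !cmxl cxD G1 G2 cxJ cxN opprK.
have cjQu : cj Q \in unitmx.
  have : cj Q *m cj (invmx Q) = 1%:M by rewrite -cjM mulmxV // cj1.
  by case/mulmx1_unit.
have McE : cmx C *m Z + cmx D = cj Q *m invmx Q by rewrite -McQ mulmxK.
have NcE : cmx A *m Z + cmx B = - cj P *m invmx Q by rewrite -NcQ mulmxK.
rewrite McE NcE invmxM' ?unitmx_inv // invmxK mulmxA mulmxKV //.
by rewrite -cjV mulNmx -cjM ZE.
Qed.


Lemma ct_inj (R : realType) (a b : R) :
  - ((Complex 1 a) / (Complex 1 a)^*)%C = - ((Complex 1 b) / (Complex 1 b)^*)%C -> a = b.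
Proof.
have nz : forall c : R, ((Complex 1 c)^*)%C != 0.
  by move=> c; rewrite /= eq_complex /= oner_eq0.
move/oppr_inj/eqP; rewrite eqr_div ?nz // => /eqP /(congr1 (@complex.Im R)) /=.
lra.
Qed.

Lemma avoid (R : realType) n (M : 'M[R[i]]_n) :
  exists t : R[i], (t *: 1%:M + (t^*)%C *: M) \in unitmx.
Proof.
pose ts := [seq (Complex 1 k%:R : R[i]) | k <- iota 0 n.+1].
have [/hasP [t _ tu]|] := boolP (has (fun t : R[i] => (t *: 1%:M + (t^*)%C *: M) \in unitmx) ts).
  by exists t.
rewrite -all_predC => /allP Hall; exfalso.
pose f (t : R[i]) := - (t / (t^*)%C).
have Hroot : all (root (char_poly M)) (map f ts).
  apply/allP => _ /mapP [t tin ->].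
  have := Hall t tin; rewrite /= unitmxE unitfE negbK => /det0P [v v0 vE].
  rewrite -eigenvalue_root_char; apply/eigenvalueP; exists v => //.
  have tn0 : (t^*)%C != 0.
    by move: tin => /mapP [k _ ->]; rewrite /= eq_complex /= oner_eq0.
  move: vE; rewrite mulmxDr -!scalemxAr mulmx1 => /eqP; rewrite addr_eq0 => /eqP vE.
  rewrite /f -[v *m M](scalerK tn0) -[_ *: (v *m M)]opprK -vE scalerN scalerA.
  by rewrite scaleNr mulrC.
have Huniq : uniq (map f ts).
  rewrite map_inj_in_uniq.
    rewrite map_inj_uniq ?iota_uniq // => k l [] /eqP; rewrite eqr_nat => /eqP.
    by [].
  move=> _ _ /mapP [k _ ->] /mapP [l _ ->]; rewrite /f => /ct_inj ->.
  by [].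
have := max_poly_roots (monic_neq0 (char_poly_monic M)) Hroot Huniq.
by rewrite !size_map size_iota size_char_poly ltnn.
Qed.


Lemma bwd (R : realType) n (g : 'M[R]_(n + n)) (Z : 'M[R[i]]_n) :
  symplectic g -> g *m tau_mx g = 1%:M -> siegel_gamma g Z ->
  exists h, symplectic h /\ g *m h = tau_mx h.
Proof.
move=> gs; move: gs (gs).
rewrite -(submxK g); move: (ulsubmx g) (ursubmx g) (dlsubmx g) (drsubmx g) => A B C D.
move=> gs /sympP [S1 S3 S2].
rewrite tau_block mulmx_block (scalar_mx_block n n 1) => /eq_block_mx [_ _ T3 T4].
move=> [[Zs Yp] Zact].
rewrite /sp_act block_mxKul block_mxKur block_mxKdl block_mxKdr tauZE in Zact.
move: Yp; set Y := map_mx _ Z => Yp.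
have ZE : Z = cx (map_mx (@complex.Re R) Z) Y by exact: cx_eta.
set X := map_mx _ Z in ZE.
have [Xs Ys] : X^T = X /\ Y^T = Y by apply: cx_inj; rewrite -cxT -ZE.
clearbody X Y.
pose Nc := cmx A *m Z + cmx B; pose Mc := cmx C *m Z + cmx D.
have NcE : Nc = cmx A *m Z + cmx B by []. have McE : Mc = cmx C *m Z + cmx D by [].
have gW : cmx (block_mx A B C D) *m col_mx Z 1%:M = col_mx Nc Mc.
  by rewrite /cmx map_block_mx mul_block_col !mulmx1.
clearbody Nc Mc.
have Id1 : (cj Nc)^T *m Mc - (cj Mc)^T *m Nc = (cj Z)^T - Z.
  have := symp_form (col_mx Z 1%:M) gs; rewrite gW !Jform => ->.
  by rewrite cj1 trmx1 mul1mx mulmx1.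
have cjZT : (cj Z)^T = cj Z by rewrite -cjT Zs.
have KE : cj Z - Z = cx 0 (- (Y + Y)).
  by rewrite [in LHS]ZE cxJ cxB subrr opprD.
have YYs : (Y + Y)^T = Y + Y by rewrite trD Ys.
have YYp : posdef (Y + Y).
  by move=> v v0; rewrite mulmxDr mulmxDl mxE; apply: addr_gt0; apply: Yp.
have Mcu : Mc \in unitmx.
  rewrite unitmxE unitfE -det_tr; apply/negP => /det0P [v v0 vM].
  have [x x0 xE] := herm_pos YYs YYp v0.
  have := congr1 (fun M => (cj v *m M *m v^T) ord0 ord0) Id1; rewrite /=.
  rewrite mulmxBr mulmxBl !mulmxA -(cjT Mc) -cjM vM -!mulmxA.
  have -> : Mc *m v^T = 0 by rewrite -[Mc]trmxK -trmx_mul vM trmx0.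
  rewrite !mulmx0 cj0 !mul0mx subr0 cjZT KE -scaleN1r cx0s.
  rewrite -scalemxAl -scalemxAr mulmxA mxE [X in _ = X -> _]mxE xE.
  move/eqP; apply/negP; rewrite eq_sym mulf_eq0 negb_or; apply/andP; split.
    by rewrite eq_complex /= oppr_eq0 oner_eq0 andbF.
  by rewrite eq_complex /= gt_eqF.
rewrite -NcE -McE in Zact.
have NcM : Nc = - cj Z *m Mc by rewrite -Zact mulmxKV.
have cjNc : cj Nc = - (Z *m cj Mc) by rewrite NcM cjM cjN cjK mulNmx.
have cjMcE : cj Mc = cmx C *m cj Z + cmx D by rewrite McE cjD cjM !cj_cmx.
have cjNcE : cj Nc = cmx A *m cj Z + cmx B by rewrite NcE cjD cjM !cj_cmx.
have CA : C *m A = D *m C by apply/subr0_eq; rewrite -mulmxN.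
have T4' : D *m D - C *m B = 1%:M by rewrite addrC -mulmxN.
have McM : Mc *m cj Mc = 1%:M.
  rewrite {1}McE mulmxDl -mulmxA (_ : Z *m cj Mc = - cj Nc); last by rewrite cjNc opprK.
  rewrite cjNcE cjMcE mulmxN !mulmxDr !mulmxA -!cmxM CA.
  by rewrite opprD addrACA addNr add0r addrC -cmxB T4' cmx1.
have cjMcM : cj Mc *m Mc = 1%:M by apply: mulmx1C.
have H : (cj Mc)^T *m (cj Z - Z) *m Mc = cj Z - Z.
  rewrite -{2}cjZT -Id1 NcM cjM cjN cjK mulNmx trN trmx_mul Zs.
  by rewrite mulmxBr mulmxBl !mulNmx !mulmxN !mulmxA opprK addrC.
  have KMc : (cj Z - Z) *m Mc = Mc^T *m (cj Z - Z).
  by rewrite -{2}H !mulmxA -trmx_mul cjMcM trmx1 mul1mx.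
have KE' : cj Z - Z = (Complex 0 (- 2)) *: cmx Y.
  by rewrite KE -cx0s scaleNr scaler_nat mulr2n.
have YMc : cmx Y *m Mc = Mc^T *m cmx Y.
  move: KMc; rewrite KE' -scalemxAl -scalemxAr; apply: scalerI.
  by rewrite eq_complex /= oppr_eq0 pnatr_eq0 andbF.
have [t c0u] := avoid (cj Mc).
move: c0u; set c0 := t *: 1%:M + _ => c0u.
have cjc0 : cj c0 = Mc *m c0.
  rewrite /c0 cjD !cjZ cj1 cjK conjcK mulmxDr -!scalemxAr mulmx1 McM.
  by rewrite [RHS]addrC.
clearbody c0.
pose G := (cj c0)^T *m cmx Y *m c0.
have GD : G = (cj c0)^T *m cmx Y *m c0 by [].
clearbody G.
have cjG : cj G = G.
  rewrite GD !cjM cjT cjK cj_cmx cjc0 mulmxA -(mulmxA _ (cmx Y)) YMc !mulmxA.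
  by rewrite -trmx_mul -cjc0.
have GT : G^T = G.
  rewrite -{2}cjG GD !trmx_mul trmxK -cmxT Ys !cjM cjT cjK cj_cmx mulmxA.
  by [].
have [Gr [Gi GE]] : exists Gr Gi, G = cx Gr Gi.
  by eexists; eexists; exact: cx_eta.
have Gi0 : Gi = 0.
  move: cjG; rewrite GE cxJ => /cx_inj [_ /matrixP Gi0].
  by apply/matrixP => i j; move: (Gi0 i j); rewrite !mxE; lra.
rewrite Gi0 -cmx_cx in GE.
have Grs : Gr^T = Gr by apply: cmx_inj; rewrite cmxT -GE GT.
have c0Tu : c0^T \in unitmx by rewrite unitmx_tr.
have Grp : posdef Gr.
  move=> v v0; pose w := cmx v *m c0^T.
  have w0 : w != 0.
    apply: contra v0 => /eqP w0; apply/eqP/cmx_inj; rewrite cmx0.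
    by rewrite -[cmx v](mulmxK c0Tu) -/w w0 mul0mx.
  have [x x0 xE] := herm_pos Ys Yp w0.
  have : cj w *m cmx Y *m w^T = cmx (v *m Gr *m v^T).
    rewrite /w cjM cj_cmx cjT trmx_mul trmxK -cmxT !mulmxA.
    by rewrite -(mulmxA (cmx v)) -(mulmxA (cmx v)) -GD GE -!cmxM.
  by move=> E; move: xE; rewrite E mxE => /complexI ->.
have [N NE] := cholesky Grs Grp.
pose c := c0 *m cmx N.
have cjc : cj c = Mc *m c by rewrite /c cjM cj_cmx cjc0 mulmxA.
have cYc : (cj c)^T *m cmx Y *m c = 1%:M.
  rewrite /c cjM cj_cmx trmx_mul -cmxT !mulmxA -(mulmxA (cmx N^T)) -(mulmxA (cmx N^T)).
  by rewrite -GD GE -!cmxM NE cmx1.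
clearbody c.
have F1 : c^T *m (Z *m c) = (Z *m c)^T *m c by rewrite trmx_mul Zs mulmxA.
have F2 : (cj c)^T *m (Z *m c) - (cj (Z *m c))^T *m c = cx 0 (1%:M + 1%:M).
  rewrite cjM trmx_mul cjZT !mulmxA -mulmxBl -mulmxBr -opprB KE' mulmxN mulNmx.
  rewrite -scalemxAr -scalemxAl cYc -scaleNr.
  apply/matrixP => i j; rewrite cx_entry !mxE.
  case: (i == j) => /=; rewrite ?mulr1 ?mulr0 ?mulr1n ?mulr0n; apply/eqP;
    rewrite eq_complex /=; apply/andP; split; apply/eqP; lra.
have McC : Mc *m c = cj c by rewrite cjc.
have NcC : Nc *m c = - cj (Z *m c).
  by rewrite NcM -mulmxA McC mulNmx cjM.
have [d' [c' cE]] : exists d' c', c = cx d' c' by eexists; eexists; exact: cx_eta.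
have [b' [a' PE]] : exists b' a', Z *m c = cx b' a' by eexists; eexists; exact: cx_eta.
exists (block_mx a' b' c' d'); split.
  rewrite PE cE !cxT !cxM in F1; rewrite PE cE !cxJ !cxT !cxM ?trN ?mulNmx ?opprK cxB in F2.
  case/cx_inj: F1 => /matrixP F1a /matrixP F1b.
  case/cx_inj: F2 => /matrixP F2a /matrixP F2b.
  apply/sympP; split; apply/matrixP => i j.
  - by move: (F1a i j) (F2a i j); rewrite !mxE; lra.
  - by move: (F1a i j) (F2a i j); rewrite !mxE; lra.
  - by move: (F1b i j) (F2b i j); rewrite !mxE; lra.
move: McC NcC; rewrite McE NcE !mulmxDl -!mulmxA PE cE !cmxl !cxD !cxJ cxN opprK.
case/cx_inj => G4 G3; case/cx_inj => G2 G1.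
by rewrite tau_block mulmx_block G1 G2 G3 G4.
Qed.


Theorem lemma3p5 (R : realType) (n : nat) (gamma : 'M[R]_(n + n)) :
  symplectic gamma -> gamma *m tau_mx gamma = 1%:M ->
  ((exists h : 'M[R]_(n + n), symplectic h /\ gamma = tau_mx h *m invmx h) <->
   (exists Z : 'M[R[i]]_n, siegel_gamma gamma Z)).
Proof.
move=> gs gt; split.
  move=> [h [hs gE]]; apply: (fwd hs).
  by rewrite gE mulmxKV // sym_unit.
move=> [Z HZ]; have [h [hs gh]] := bwd gs gt HZ.
by exists h; split => //; rewrite -gh mulmxK // sym_unit.
Qed.
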